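(* Let $M=p_1^{n_1}\cdots p_K^{n_K}$ with distinct primes and $n_\nu\in\mathbb{N}$, let $A\oplus B=\mathbb{Z}_M$, and fix $i\in\{1,\dots,K\}$. Then the following are equivalent: (I) $\Phi_{p_i^{n_i}}(X)\mid A(X)$, and for every $m$ with $p_i^{n_i}\mid m\mid M$, $m\in\mathrm{Div}(A)$ implies $m/p_i\notin\mathrm{Div}(B)$; (II) for every $r\in R$, the tiling $A\oplus rB=\mathbb{Z}_M$ has uniform $(rB,A)$ splitting parity in the $p_i$ direction, i.e. every fiber $z*F_i$, $z\in\mathbb{Z}_M$, splits with parity $(rB,A)$ with respect to the tiling $A\oplus rB=\mathbb{Z}_M$; (III) for every $a\in A$, $b\in B$ and every $x\in a*F_i$, we have $A_{x,b}\subset\Pi(x,p_i^{n_i})$.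
   Context: $A\oplus B=\mathbb{Z}_M$ means every element of $\mathbb{Z}_M$ is uniquely $a+b$ with $a\in A$, $b\in B$. $A(X)=\sum_{a\in A}X^a$ ($A$ viewed in $\{0,\dots,M-1\}$), $\Phi_s$ the $s$-th cyclotomic polynomial. $(x,M)=\gcd(x,M)$; $\mathrm{Div}(A)=\{(a-a',M):a,a'\in A\}$. $R=\{r\in\mathbb{Z}_M:(r,M)=1\}$, $rB=\{rb:b\in B\}$. $\Pi(y,p_i^\alpha)=\{y'\in\mathbb{Z}_M:p_i^\alpha\mid y-y'\}$. $F_i=\{0,M/p_i,\dots,(p_i-1)M/p_i\}$, $x*F_i=\{x+f:f\in F_i\}$. For $x,y\in\mathbb{Z}_M$, $A_{x,y}=\{a\in A:(x-a,M)=(y-b',M)\text{ for some }b'\in B\}$. For a tiling $A\oplus C=\mathbb{Z}_M$ and $Z\subset\mathbb{Z}_M$, $\Sigma_A(Z)=\{a\in A:a+c\in Z\text{ for some }c\in C\}$, $\Sigma_C(Z)$ analogously. A fiber $Z=z*F_i$ splits with parity $(C,A)$ if $p_i^{n_i}\mid c-c'$ for all $c,c'\in\Sigma_C(Z)$ and, for all distinct $a,a'\in\Sigma_A(Z)$, $p_i^{n_i-1}\mid a-a'$ but $p_i^{n_i}\nmid a-a'$. *)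

(* Defs.v *)
From mathcomp Require Import all_boot all_order all_algebra all_field.
Set Implicit Arguments. Unset Strict Implicit. Unset Printing Implicit Defensive.

(* Elements of Z_M are represented by 'I_M (residues 0..M-1); subsets of Z_M
   by {set 'I_M}. All arithmetic is done on representatives modulo M. *)

(* representative in [0,M) of x - y in Z_M, for x y < M *)
Definition zdiff (M x y : nat) : nat := (x + M - y) %% M.

Definition tiling (M : nat) (A B : {set 'I_M}) : Prop :=
  forall x : 'I_M, exists! ab : 'I_M * 'I_M,
    [&& ab.1 \in A, ab.2 \in B & (ab.1 + ab.2) %% M == x].

Definition polyA (M : nat) (A : {set 'I_M}) : {poly int} :=
  (\sum_(a in A) 'X^a)%R.

Definition Div (M : nat) (A : {set 'I_M}) (m : nat) : Prop :=
  exists a a' : 'I_M, [/\ a \in A, a' \in A & gcdn (zdiff M a a') M = m].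

Definition mulset (M r : nat) (B : {set 'I_M}) : {set 'I_M} :=
  [set y : 'I_M | [exists b in B, val y == (r * b) %% M]].

Definition Pi (M : nat) (y : 'I_M) (q : nat) : {set 'I_M} :=
  [set y' : 'I_M | q %| zdiff M y y'].

Definition fiber (M p : nat) (x : 'I_M) : {set 'I_M} :=
  [set y : 'I_M | [exists k : 'I_p, val y == (x + k * (M %/ p)) %% M]].

(* Sigma_X(Z) w.r.t. the pair (X, Y): { x in X : x + y in Z for some y in Y } *)
Definition Sigma (M : nat) (X Y Z : {set 'I_M}) : {set 'I_M} :=
  [set x in X | [exists y in Y, [exists z in Z, val z == (x + y) %% M]]].

(* the fiber Z splits with parity (C, A) w.r.t. the tiling A (+) C,
   p^n being the full power of p dividing M *)
Definition splits_parity (M p n : nat) (C A Z : {set 'I_M}) : Prop :=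
  (forall c c', c \in Sigma C A Z -> c' \in Sigma C A Z ->
     p ^ n %| zdiff M c c') /\
  (forall a a', a \in Sigma A C Z -> a' \in Sigma A C Z -> a != a' ->
     p ^ n.-1 %| zdiff M a a' /\ ~~ (p ^ n %| zdiff M a a')).

Definition Axy (M : nat) (A B : {set 'I_M}) (x y : 'I_M) : {set 'I_M} :=
  [set a in A | [exists b' in B, gcdn (zdiff M x a) M == gcdn (zdiff M y b') M]].

(* Main.v *)
Require Import Defs.
From mathcomp Require Import all_boot all_order all_algebra all_field.
From mathcomp Require Import zify.
Set Implicit Arguments. Unset Strict Implicit. Unset Printing Implicit Defensive.
Import GRing.Theory.
Section Arith.
Variable M : nat.
Hypothesis M0 : 0 < M.

Lemma zdiffK x y : y <= M -> zdiff M x y + y = x %[mod M].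
Proof.
move=> yM; rewrite /zdiff modnDml subnK; last by apply: leq_trans yM (leq_addl _ _).
by rewrite modnDr.
Qed.

Lemma zdiff_mod x y : y <= M -> zdiff M x y = (x + M - y) %[mod M].
Proof. by move=> _; rewrite /zdiff modn_mod. Qed.

Lemma dvd_zdiff d x y : d %| M -> y <= M ->
  (d %| zdiff M x y) = (x == y %[mod d]).
Proof.
move=> dM yM; have le : y <= x + M by apply: leq_trans yM (leq_addl _ _).
rewrite /dvdn /zdiff (modn_dvdm _ dM) -/(dvdn d (x + M - y)) -eqn_mod_dvd //.
by rewrite -modnDmr (eqP dM) addn0.
Qed.

Lemma gcd_mod u v : u = v %[mod M] -> gcdn u M = gcdn v M.
Proof. by move=> e; rewrite -gcdn_modl e gcdn_modl. Qed.

Lemma gcd_dvdP u v : (forall d, d %| M -> (d %| u) = (d %| v)) ->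
  gcdn u M = gcdn v M.
Proof.
move=> H; apply/eqP; rewrite eqn_dvd; apply/andP; split.
  rewrite dvdn_gcd dvdn_gcdr andbT -(H _ (dvdn_gcdr u M)); by apply: dvdn_gcdl.
rewrite dvdn_gcd dvdn_gcdr andbT (H _ (dvdn_gcdr v M)); by apply: dvdn_gcdl.
Qed.

Lemma gcd_unit r u : coprime r M -> gcdn (r * u) M = gcdn u M.
Proof. by move=> c; rewrite gcdnC Gauss_gcdr 1?gcdnC // coprime_sym. Qed.

End Arith.
Lemma coprime_primes a b :
  (forall l, prime l -> l %| a -> l %| b -> False) -> coprime a b.
Proof.
move=> H; rewrite /coprime; set g := gcdn a b.
have [g0|g1|gbig] := ltngtP g 1.
- have : ~~ (0 < g) by rewrite -leqNgt -ltnS.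
  rewrite gcdn_gt0 negb_or -!eqn0Ngt => /andP[/eqP a0 /eqP b0].
  by case: (H 2) => //; rewrite ?a0 ?b0 dvdn0.
- case: (H (pdiv g) (pdiv_prime g1)).
  + by apply: dvdn_trans (pdiv_dvd g) (dvdn_gcdl a b).
  + by apply: dvdn_trans (pdiv_dvd g) (dvdn_gcdr a b).
- by apply/eqP.
Qed.

Lemma coprime_prime_dvd a b l : coprime a b -> prime l -> l %| a -> l %| b -> False.
Proof.
move=> c pl la lb.
have : l %| gcdn a b by rewrite dvdn_gcd la lb.
by rewrite (eqP c) dvdn1 => /eqP l1; move: (prime_gt1 pl); rewrite l1.
Qed.

Section Unit.
Variable M : nat.
Hypothesis M0 : 0 < M.

Lemma unit_lift r0 N : N %| M -> coprime r0 N ->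
  exists r, coprime r M /\ r = r0 %[mod N].
Proof.
move=> NM c0.
pose s := \prod_(l <- primes M | ~~ (l %| r0)) l.
have sP l : prime l -> (l %| s) = (l \in primes M) && ~~ (l %| r0).
  move=> pl; rewrite /s Euclid_dvd_prod // big_has_cond.
  apply/hasP/idP.
    case=> l' l'M /= /andP[nl' ll']; move: (l'M); rewrite mem_primes => /and3P[pl' _ _].
    by move: ll'; rewrite dvdn_prime2 // => /eqP ->; rewrite l'M nl'.
  by move=> /andP[lM nl]; exists l => //=; rewrite nl dvdnn.
exists (r0 + N * s); split; last by rewrite addnC mulnC modnMDl.
apply: coprime_primes => l pl lr lM.
have lMp : l \in primes M by rewrite mem_primes pl M0 lM.
have [lr0|nlr0] := boolP (l %| r0).
- have lNs : l %| N * s by rewrite -(dvdn_addr _ lr0).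
  move: lNs; rewrite Euclid_dvdM // => /orP[lN|ls].
    exact: (coprime_prime_dvd c0 pl lr0 lN).
  by move: ls; rewrite sP // lr0 andbF.
- have ls : l %| s by rewrite sP // lMp nlr0.
  have : l %| N * s by rewrite dvdn_mull.
  by move=> lNs; move: lr; rewrite addnC (dvdn_addr _ lNs) (negbTE nlr0).
Qed.

Lemma unit_exists u w : gcdn u M = gcdn w M ->
  exists r, coprime r M /\ u = r * w %[mod M].
Proof.
move=> e.
set m := gcdn w M.
have m0 : 0 < m by rewrite gcdn_gt0 M0 orbT.
have mM : m %| M by apply: dvdn_gcdr.
set N := M %/ m.
have MN : M = N * m by rewrite divnK.
have N0 : 0 < N by move: M0; rewrite MN muln_gt0 => /andP[].
have mu : m %| u by rewrite /m -e dvdn_gcdl.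
have mw : m %| w by apply: dvdn_gcdl.
set u1 := u %/ m; set w1 := w %/ m.
have Du : u = u1 * m by rewrite divnK.
have Dw : w = w1 * m by rewrite divnK.
have cu : coprime u1 N.
  rewrite /coprime -(eqn_pmul2r m0) mul1n muln_gcdl -Du -MN; apply/eqP.
  by rewrite e.
have cw : coprime w1 N.
  rewrite /coprime -(eqn_pmul2r m0) mul1n muln_gcdl -Dw -MN; apply/eqP.
  by [].
have [N1|N1] := leqP N 1.
  have N1' : N = 1 by apply/eqP; rewrite eqn_leq N1 N0.
  exists 1; split; first by apply: coprime1n.
  by rewrite mul1n MN N1' mul1n Du Dw !modnMl.
have w10 : 0 < w1.
  case: (posnP w1) => // w10; move: cw; rewrite w10 /coprime gcd0n => /eqP N1'.
  by move: N1; rewrite N1'.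
case: (@egcdnP w1 N w10) => k1 k2 ek _.
have ek' : k1 * w1 = 1 %[mod N].
  by rewrite ek (eqP cw) modnMDl.
have ck1 : coprime k1 N.
  apply: coprime_primes => l pl lk lN.
  have : l %| k1 * w1 %% N by rewrite /dvdn (modn_dvdm _ lN) -/(dvdn _ _) dvdn_mulr.
  by rewrite ek' modn_small // (Euclid_dvd1 pl).
have NM : N %| M by rewrite MN dvdn_mulr.
have [r [cr er]] := unit_lift NM (r0 := k1 * u1) (etrans (coprimeMl _ _ _) (introT andP (conj ck1 cu))).
exists r; split => //.
rewrite Du Dw MN mulnA -!muln_modl; congr (_ * _).
rewrite -modnMml er modnMml -mulnA mulnCA -modnMmr ek' modnMmr muln1.
by [].
Qed.
End Unit.
Lemma Lp p n e : prime p -> ~~ (p ^ n %| e) -> e * p %| lcmn e (p ^ n).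
Proof.
move=> pp ne.
have [j jn Dg] : exists2 j, j <= n & gcdn e (p ^ n) = p ^ j.
  by apply/dvdn_pfactor => //; apply: dvdn_gcdr.
have jn' : j < n.
  rewrite ltn_neqAle jn andbT; apply/eqP => ej; move: ne; rewrite -ej -Dg.
  by rewrite dvdn_gcdl.
rewrite /lcmn Dg -muln_divA ?dvdn_exp2l // -expnB ?prime_gt0 //.
apply: dvdn_mul (dvdnn e) _.
by rewrite -{1}(expn1 p) dvdn_exp2l // subn_gt0.
Qed.

Section PStruct.
Variables M p : nat.
Hypotheses (M0 : 0 < M) (pp : prime p) (pM : p %| M).
Local Notation n := (logn p M).
Local Notation q := (M %/ p).

Lemma n_gt0 : 0 < n.
Proof. by rewrite logn_gt0 mem_primes pp M0 pM. Qed.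

Lemma pnM : p ^ n %| M.
Proof. by apply: pfactor_dvdnn. Qed.

Lemma Mqp : M = q * p.
Proof. by rewrite divnK. Qed.

Lemma pn_split : p ^ n = p ^ n.-1 * p.
Proof. by rewrite -expnSr prednK // n_gt0. Qed.

Lemma s_dvd_q : p ^ n.-1 %| q.
Proof. by rewrite dvdn_divRL // -pn_split pnM. Qed.

Lemma pn_ndvd_q : ~~ (p ^ n %| q).
Proof.
apply/negP => h.
have : p ^ n * p %| M by rewrite {2}Mqp dvdn_pmul2r ?prime_gt0.
by rewrite -expnSr pfactor_dvdn // ltnn.
Qed.

Lemma pn_ndvd_kq k : 0 < k < p -> ~~ (p ^ n %| k * q).
Proof.
case/andP=> k0 kp; apply/negP => h.
have cp : coprime (p ^ n) k.
  rewrite coprime_pexpl ?n_gt0 // prime_coprime //; apply/negP => /dvdn_leq.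
  by move=> /(_ k0); rewrite leqNgt kp.
by move: h; rewrite Gauss_dvdr // (negbTE pn_ndvd_q).
Qed.

Lemma Dq d : d %| M -> ~~ (p ^ n %| d) -> d %| q.
Proof.
move=> dM nd; rewrite dvdn_divRL //.
apply: dvdn_trans (Lp pp nd) _; by rewrite dvdn_lcm dM pnM.
Qed.

Lemma gcd_shift_same u k : 0 < k < p -> ~~ (p ^ n %| u) -> ~~ (p ^ n %| u + k * q) ->
  gcdn (u + k * q) M = gcdn u M.
Proof.
move=> kp nu nuk; apply: gcd_dvdP => d dM.
have [pd|npd] := boolP (p ^ n %| d).
  apply/idP/idP => h.
    by move: nuk; rewrite (dvdn_trans pd h).
  by move: nu; rewrite (dvdn_trans pd h).
have dq : d %| k * q by rewrite dvdn_mull // Dq.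
by rewrite dvdn_addl.
Qed.

Lemma gcd_shift_p u k : 0 < k < p -> p ^ n %| u ->
  gcdn (u + k * q) M = gcdn u M %/ p.
Proof.
move=> kp pu.
set m := gcdn u M; set e := gcdn (u + k * q) M.
have pnm : p ^ n %| m by rewrite dvdn_gcd pu pnM.
have pm : p %| m.
  apply: dvdn_trans pnm; rewrite -{1}(expn1 p); apply: dvdn_exp2l; exact: n_gt0.
have mu : m %| u by apply: dvdn_gcdl.
have mM : m %| M by apply: dvdn_gcdr.
apply/eqP; rewrite eqn_dvd; apply/andP; split.
- have ne : ~~ (p ^ n %| e).
    apply/negP => h; have : p ^ n %| u + k * q.
      by apply: dvdn_trans h _; apply: dvdn_gcdl.
    by rewrite dvdn_addr // (negbTE (pn_ndvd_kq kp)).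
  have eq : e %| q by apply: Dq ne; apply: dvdn_gcdr.
  rewrite dvdn_divRL // dvdn_gcd; apply/andP; split.
  + have eu : e %| u.
      have : e %| u + k * q by apply: dvdn_gcdl.
      by rewrite dvdn_addl // dvdn_mull.
    apply: dvdn_trans (Lp pp ne) _; by rewrite dvdn_lcm eu pu.
  + by rewrite Mqp dvdn_pmul2r ?prime_gt0.
- rewrite dvdn_gcd; apply/andP; split.
  + apply: dvdn_add.
      by apply: dvdn_trans mu; apply: dvdn_div.
    by apply: dvdn_mull; rewrite dvdn_divLR ?prime_gt0 // divnK // mulnC -Mqp.
  + by apply: dvdn_trans mM; apply: dvdn_div.
Qed.

End PStruct.
Section TijComb.
Variables (M : nat) (A B : {set 'I_M}).
Hypothesis M0 : 0 < M.

Definition Utile (f : 'I_M -> nat) := forall x : 'I_M,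
  exists! ab : 'I_M * 'I_M, [&& ab.1 \in A, ab.2 \in B & (ab.1 + f ab.2) %% M == x].

Definition phi (f : 'I_M -> nat) (ab : 'I_M * 'I_M) : 'I_M :=
  Ordinal (ltn_pmod (ab.1 + f ab.2) M0).

Definition inAB (ab : 'I_M * 'I_M) := (ab.1 \in A) && (ab.2 \in B).

Definition Ncnt f (x : 'I_M) := #|[set ab | inAB ab && (phi f ab == x)]|.

Lemma phiE f ab x : (phi f ab == x) = ((ab.1 + f ab.2) %% M == x).
Proof. by []. Qed.

Lemma Utile_card f : Utile f <-> forall x, Ncnt f x = 1.
Proof.
split.
  move=> U x; apply/eqP/cards1P; case: (U x) => ab0 [h0 u0].
  exists ab0; apply/setP => ab; rewrite !inE; apply/idP/idP.
    by move=> h; apply/eqP; apply/esym/u0; move: h; rewrite /inAB -andbA.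
  by move/eqP ->; move: h0; rewrite /inAB -andbA.
move=> N x; move: (N x) => /eqP/cards1P [ab0 e].
have h0 : ab0 \in [set ab | inAB ab && (phi f ab == x)] by rewrite e set11.
exists ab0; split; first by move: h0; rewrite inE /inAB -andbA.
move=> ab h; have : ab \in [set ab | inAB ab && (phi f ab == x)].
  by rewrite inE /inAB -andbA.
by rewrite e inE => /eqP ->.
Qed.

Lemma Utile_ext f g : (forall b, f b = g b) -> Utile f -> Utile g.
Proof.
move=> fg U x; case: (U x) => ab [h u]; exists ab; split.
  by rewrite -fg.
by move=> ab' h'; apply: u; rewrite fg.
Qed.

Lemma sum_partition (V : nmodType) f (G : 'I_M -> V) :
  (\sum_(ab | inAB ab) G (phi f ab) = \sum_x G x *+ Ncnt f x)%R.
Proof.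
rewrite (partition_big (phi f) predT) //=; apply: eq_bigr => x _.
rewrite (eq_bigr (fun _ => G x)); last by move=> ab /andP[_ /eqP ->].
by rewrite sumr_const /Ncnt; congr (_ *+ _)%R; apply: eq_card => ab; rewrite inE.
Qed.

Lemma sum_Utile (V : nmodType) f (G : 'I_M -> V) : Utile f ->
  (\sum_(ab | inAB ab) G (phi f ab) = \sum_x G x)%R.
Proof.
move=> /Utile_card U; rewrite sum_partition; apply: eq_bigr => x _.
by rewrite U.
Qed.

Lemma sumNcnt f : \sum_x Ncnt f x = #|A| * #|B|.
Proof.
have -> : #|A| * #|B| = \sum_(ab | inAB ab) 1.
  by rewrite sum1_card -cardX; apply: eq_card => ab; rewrite !inE.
rewrite (partition_big (phi f) predT) //=; apply: eq_bigr => x _.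
by rewrite sum1_card /Ncnt; apply: eq_card => ab; rewrite inE.
Qed.

End TijComb.
Section TijPoly.
Variables (M : nat) (A B : {set 'I_M}).
Hypothesis M0 : 0 < M.
Variables (R : fieldType) (t : nat).
Hypothesis ct : t \in [pchar R]%R.

Local Notation D := ('X^M - 1 : {poly R})%R.
Local Notation cong P Q := (D %| (P - Q))%R.
Local Notation S := (\sum_(x < M) 'X^x : {poly R})%R.

Lemma cong_refl (P : {poly R}) : cong P P.
Proof. by rewrite subrr dvdp0. Qed.

Lemma cong_trans (P Q T : {poly R}) : cong P Q -> cong Q T -> cong P T.
Proof.
move=> h1 h2; have := dvdp_add h1 h2.
by rewrite addrA subrK.
Qed.

Lemma cong_mulr (P Q Z : {poly R}) : cong P Q -> cong (P * Z)%R (Q * Z)%R.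
Proof. by move=> h; rewrite -mulrBl dvdp_mulr. Qed.

Lemma cong_sum (I : Type) (r : seq I) (P : pred I) (F G : I -> {poly R}) :
  (forall i, P i -> cong (F i) (G i)) ->
  cong (\sum_(i <- r | P i) F i)%R (\sum_(i <- r | P i) G i)%R.
Proof.
move=> h; rewrite -sumrB; apply: (@big_ind _ (fun Q : {poly R} => (D %| Q)%R)) => //.
by move=> x y; apply: dvdp_add.
Qed.

Lemma cong_Xmod u : cong ('X^u)%R ('X^(u %% M))%R.
Proof.
rewrite {1}(divn_eq u M) exprD mulnC exprM.
rewrite -{2}(mul1r ('X^(u %% M))%R) -mulrBl.
apply: Pdiv.Idomain.dvdp_mulr; rewrite [X in (_ %| X)%R]subrX1; apply: Pdiv.Idomain.dvdp_mulr; apply: dvdpp.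
Qed.

Lemma cong_XS : cong ('X * S)%R S.
Proof.
have : (S * ('X - 1))%R = D by rewrite mulrC -subrX1.
by move=> e; rewrite -{2}(mul1r S) -mulrBl mulrC e dvdpp.
Qed.

Lemma cong_XjS j : cong ('X^j * S)%R S.
Proof.
elim: j => [|j IH]; first by rewrite expr0 mul1r cong_refl.
rewrite exprS -mulrA; apply: cong_trans _ IH.
by rewrite mulrCA -mulrBr; apply: Pdiv.Idomain.dvdp_mull; apply: cong_XS.
Qed.

Variable f : 'I_M -> nat.
Hypothesis U : Utile A B f.

Local Notation PA := (\sum_(a in A) 'X^a : {poly R})%R.
Local Notation PB := (\sum_(b in B) 'X^(f b) : {poly R})%R.

Lemma cong_SPB : cong (S * PB)%R (S *+ #|B|)%R.
Proof.
rewrite mulr_sumr -sumr_const; apply: cong_sum => b _.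
by rewrite mulrC cong_XjS.
Qed.

Lemma cong_SPBj j : cong (S * PB ^+ j)%R (S *+ (#|B| ^ j))%R.
Proof.
elim: j => [|j IH]; first by rewrite expr0 mulr1 expn0 cong_refl.
rewrite exprSr mulrA; apply: cong_trans (cong_mulr PB IH) _.
rewrite expnSr mulrnA mulrnAl mulrnAC -mulrnBl -mulr_natr.
by apply: Pdiv.Idomain.dvdp_mulr; apply: cong_SPB.
Qed.


Lemma cong_sym (P Q : {poly R}) : cong P Q -> cong Q P.
Proof. by move=> h; rewrite -[(Q - P)%R]opprB dvdpNr. Qed.

Lemma cong_PAPB : cong (PA * PB)%R S.
Proof.
have -> : (PA * PB = \sum_(ab | inAB A B ab) 'X^(ab.1 + f ab.2))%R.
  rewrite mulr_suml (eq_bigr (fun a : 'I_M => \sum_(b in B) 'X^a * 'X^(f b)))%R; last first.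
    by move=> a _; rewrite mulr_sumr.
  rewrite pair_big_dep; apply: eq_bigr => ab _; by rewrite exprD.
apply: (cong_trans (Q := (\sum_(ab | inAB A B ab) 'X^(phi M0 f ab))%R)).
  by apply: cong_sum => ab _; apply: cong_Xmod.
rewrite (sum_Utile M0 (fun x : 'I_M => ('X^x : {poly R})%R) U).
exact: cong_refl.
Qed.

Lemma PBt : (PB ^+ t = \sum_(b in B) 'X^(t * f b))%R.
Proof.
have ctp : t \in [pchar {poly R}]%R by rewrite pchar_poly.
rewrite -(pFrobenius_autE ctp) rmorph_sum; apply: eq_bigr => b _.
by rewrite mulnC exprM; apply: pFrobenius_autE.
Qed.

Local Notation g := (fun b => t * f b).

Lemma main_cong : cong (\sum_(x : 'I_M) 'X^x *+ Ncnt A B M0 g x)%R (S *+ (#|B| ^ t.-1))%R.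
Proof.
have t0 : 0 < t by apply: prime_gt0; apply: pcharf_prime ct.
rewrite -(sum_partition A B M0 g (fun x : 'I_M => ('X^x : {poly R})%R)).
apply: cong_trans (cong_SPBj t.-1).
apply: cong_trans (cong_mulr (PB ^+ t.-1) cong_PAPB).
rewrite -mulrA -exprS prednK // PBt mulr_suml.
rewrite (eq_bigr (fun a : 'I_M => \sum_(b in B) 'X^a * 'X^(t * f b)))%R; last first.
  by move=> a _; rewrite mulr_sumr.
rewrite pair_big_dep; apply: cong_sum => ab _; rewrite -exprD.
exact: cong_sym (cong_Xmod _).
Qed.

Lemma Ncnt_mod x : ((Ncnt A B M0 g x)%:R = (#|B| ^ t.-1)%:R :> R)%R.
Proof.
set c := #|B| ^ t.-1.
pose a (y : 'I_M) := ((Ncnt A B M0 g y)%:R - c%:R : R)%R.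
pose P := (\sum_(y : 'I_M) a y *: 'X^y : {poly R})%R.
have eP : P = (\sum_(x : 'I_M) 'X^x *+ Ncnt A B M0 g x - S *+ c)%R.
  rewrite /P -sumrMnl -sumrB; apply: eq_bigr => y _.
  by rewrite /a scalerBl !scaler_nat.
have DP : (D %| P)%R by rewrite eP main_cong.
have coefP k : (P`_k = \sum_(y : 'I_M | nat_of_ord y == k) a y)%R.
  by rewrite /P coef_sumMXn.
have P0 : P = 0%R.
  apply/eqP; apply/negPn/negP => nP.
  have := dvdp_leq nP DP; rewrite size_Xn_sub_1 // leqNgt ltnS.
  move/negP; apply; apply/leq_sizeP => j jM; rewrite coefP big_pred0 //.
  by move=> y /=; apply/negbTE; rewrite neq_ltn (leq_trans (ltn_ord y) jM).
have : (P`_x = a x)%R.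
  rewrite coefP (big_pred1 x) // => y /=; by rewrite -val_eqE.
by rewrite P0 coef0 /a => /esym/eqP; rewrite subr_eq0 => /eqP.
Qed.

End TijPoly.
Lemma sum_eq_le (I : finType) (F G : I -> nat) :
  (forall i, F i <= G i) -> \sum_i F i = \sum_i G i -> forall i, F i = G i.
Proof.
move=> le e i; apply/eqP; rewrite eqn_leq le /= leqNgt; apply/negP => lt.
move: e; rewrite (bigD1 i) //= [in RHS](bigD1 i) //= => e.
have : F i + \sum_(j | j != i) F j < G i + \sum_(j | j != i) G j.
  by rewrite -addSn leq_add // leq_sum.
by rewrite e ltnn.
Qed.

Section Tij.
Variables (M : nat) (A B : {set 'I_M}).
Hypothesis M1 : 1 < M.
Let M0 : 0 < M. Proof. exact: ltnW. Qed.

Lemma Utile_cardAB f : Utile A B f -> #|A| * #|B| = M.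
Proof.
move=> /(Utile_card A B M0) U; rewrite -(sumNcnt A B M0 f) (eq_bigr (fun=> 1)) //.
by rewrite sum1_card card_ord.
Qed.

Lemma tij_step f t : Utile A B f -> prime t -> coprime t M ->
  Utile A B (fun b => t * f b).
Proof.
move=> U pt ctM.
have ntB : ~~ (t %| #|B|).
  apply/negP => tB; move: ctM; rewrite prime_coprime // -(Utile_cardAB U).
  by rewrite dvdn_mull.
have ct := pchar_Fp pt.
have NX := Ncnt_mod M0 ct U.
have N1 x : 0 < Ncnt A B M0 (fun b => t * f b) x.
  rewrite lt0n; apply/negP => /eqP e; move: (NX x); rewrite e => /esym/eqP.
  rewrite -(dvdn_pcharf ct) Euclid_dvdX // (negbTE ntB) //.
apply/(Utile_card A B M0) => x.
apply/esym; apply: (@sum_eq_le _ (fun y => 1) (Ncnt A B M0 (fun b => t * f b)) N1 _ x) => /=.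
by rewrite (sumNcnt A B M0) (Utile_cardAB U) sum1_card card_ord.
Qed.

Hypothesis T : tiling A B.

Lemma tij_all r : coprime r M -> Utile A B (fun b => r * b).
Proof.
elim/ltn_ind: r => r IH cr.
have [r0|r1|rbig] := ltngtP r 1.
- have : r = 0 by move: r0; rewrite ltnS leqn0 => /eqP.
  move=> e; move: cr; rewrite e /coprime gcd0n => /eqP eM; exfalso; move: M1; by rewrite eM.
- set t := pdiv r.
  have pt : prime t by apply: pdiv_prime.
  have tr : t %| r by apply: pdiv_dvd.
  set r' := r %/ t.
  have r'r : r' < r by apply: ltn_Pdiv; [apply: prime_gt1 | apply: ltnW].
  have cr' : coprime r' M by apply: coprime_dvdl cr; apply: dvdn_div.
  have ct : coprime t M by apply: coprime_dvdl cr.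
  have := tij_step (IH r' r'r cr') pt ct.
  apply: Utile_ext => b; by rewrite mulnA [t * _]mulnC /r' divnK.
- rewrite rbig; apply: (Utile_ext (f := fun b : 'I_M => nat_of_ord b)) => [b|x].
    by rewrite mul1n.
  case: (T x) => ab [h u]; exists ab; split => // ab' h'; exact: u.
Qed.

Lemma tij_uniq r a a' b b' : coprime r M -> a \in A -> a' \in A -> b \in B -> b' \in B ->
  a + r * b = a' + r * b' %[mod M] -> a = a' /\ b = b'.
Proof.
move=> cr aA a'A bB b'B e.
case: (tij_all cr (Ordinal (ltn_pmod (a + r * b) M0))) => ab [h u].
have e1 := u (a, b); have e2 := u (a', b').
have E1 : (a, b) = ab by apply/esym/e1; rewrite /= aA bB /=.
have E2 : (a', b') = ab by apply/esym/e2; rewrite /= a'A b'B /= -e.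
by move: E1; rewrite -E2 => -[-> ->].
Qed.

End Tij.
Lemma modDl M x x' y : x = x' %[mod M] -> x + y = x' + y %[mod M].
Proof. by move=> e; rewrite -modnDml e modnDml. Qed.
Lemma modDr M x y y' : y = y' %[mod M] -> x + y = x + y' %[mod M].
Proof. by move=> e; rewrite -modnDmr e modnDmr. Qed.
Lemma modMr M x y y' : y = y' %[mod M] -> x * y = x * y' %[mod M].
Proof. by move=> e; rewrite -modnMmr e modnMmr. Qed.

Section Sands.
Variables (M : nat) (A B : {set 'I_M}).
Hypothesis M1 : 1 < M.
Let M0 : 0 < M. Proof. exact: ltnW. Qed.
Hypothesis T : tiling A B.

Lemma sands (a a' b b' : 'I_M) : a \in A -> a' \in A -> b \in B -> b' \in B ->
  gcdn (zdiff M a a') M = gcdn (zdiff M b b') M -> a = a'.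
Proof.
move=> aA a'A bB b'B e.
case: (unit_exists M0 e) => r [cr er].
have bM : b' <= M by apply: ltnW.
have aM : a' <= M by apply: ltnW.
have key : a + r * b' = a' + r * b %[mod M].
  rewrite -(modDl (r * b') (zdiffK a aM)).
  rewrite (modDl (r * b') (modDl a' er)).
  rewrite -(modDr a' (modMr r (zdiffK b bM))).
  by rewrite mulnDr addnAC addnC.
by case: (tij_uniq M1 T cr aA a'A b'B bB key).
Qed.

End Sands.
Lemma Phi_pp (p k : nat) : prime p ->
  ('X^(p ^ k.+1) - 1 : {poly int})%R = ('Phi_(p ^ k.+1) * ('X^(p ^ k) - 1))%R.
Proof.
move=> pp.
have p0 : 0 < p := prime_gt0 pp.
have N0 : 0 < p ^ k.+1 by rewrite expn_gt0 p0.
have s0 : 0 < p ^ k by rewrite expn_gt0 p0.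
rewrite -(prod_Cyclotomic N0) -(prod_Cyclotomic s0).
have pe : perm_eq (divisors (p ^ k.+1)) (p ^ k.+1 :: divisors (p ^ k)).
  apply: uniq_perm; first exact: divisors_uniq.
    rewrite /= divisors_uniq andbT -dvdn_divisors //.
    apply/negP => /(dvdn_leq s0); rewrite leqNgt ltn_exp2l ?prime_gt1 //.
    by rewrite ltnSn.
  move=> d; rewrite inE -!dvdn_divisors //.
  apply/idP/idP.
    case/(dvdn_pfactor _ _ pp) => j jk ->.
    case: (ltngtP j k.+1) => [jl|jg|->]; last by rewrite eqxx.
    - by rewrite dvdn_exp2l ?orbT // -ltnS.
    - by move: jk; rewrite leqNgt jg.
  case/orP => [/eqP -> //|h]; apply: dvdn_trans h _.
  by apply: dvdn_exp2l.
by rewrite (perm_big _ pe) big_cons.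
Qed.
Section Main.
Variables (M p : nat) (A B : {set 'I_M}).
Hypotheses (M0 : 0 < M) (pp : prime p) (pM : p %| M) (T : tiling A B).
Local Notation n := (logn p M).
Local Notation q := (M %/ p).

Let M1 : 1 < M.
Proof. exact: leq_trans (prime_gt1 pp) (dvdn_leq M0 pM). Qed.

Let pnM : p ^ n %| M := pnM M p.

Lemma dvd_modM d w w' : d %| M -> w = w' %[mod M] -> (d %| w) = (d %| w').
Proof.
by move=> dM e; rewrite /dvdn -(modn_dvdm w dM) e (modn_dvdm w' dM).
Qed.

Lemma mod_down d w w' : d %| M -> w = w' %[mod M] -> w = w' %[mod d].
Proof. by move=> dM e; rewrite -(modn_dvdm w dM) e (modn_dvdm w' dM). Qed.

Lemma zdiff_char w u v : v <= M -> w + v = u %[mod M] -> w = zdiff M u v %[mod M].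
Proof. by move=> vM e; apply/eqP; rewrite -(eqn_modDr v) e zdiffK. Qed.

Lemma kq_mod k1 k2 : k1 = k2 %[mod p] -> k1 * q = k2 * q %[mod M].
Proof.
move=> e; rewrite {2 4}(Mqp pM) mulnC [k2 * _]mulnC -!muln_modr.
by rewrite e.
Qed.

Definition SP := forall (a a' b b' : 'I_M) (k : nat), k < p ->
  a \in A -> a' \in A -> b \in B -> b' \in B ->
  gcdn (zdiff M ((a + k * q) %% M) a') M = gcdn (zdiff M b b') M ->
  p ^ n %| zdiff M ((a + k * q) %% M) a'.

Lemma FL (r : nat) (a a' b b' : 'I_M) z k1 k2 : SP -> coprime r M ->
  a \in A -> a' \in A -> b \in B -> b' \in B ->
  a + r * b = z + k1 * q %[mod M] -> a' + r * b' = z + k2 * q %[mod M] ->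
  r * b = r * b' %[mod p ^ n].
Proof.
move=> H cr aA a'A bB b'B e1 e2.
set k := (k1 + (p - 1) * k2) %% p.
have kp : k < p by apply: ltn_pmod; apply: prime_gt0.
set x := (a' + k * q) %% M.
have ek : k2 + k = k1 %[mod p].
  rewrite modnDmr addnA [k2 + k1]addnC -addnA -{1}(mul1n k2) -mulnDl.
  rewrite subnKC ?prime_gt0 // mulnC.
  by rewrite addnC modnMDl.
have c1 : x + r * b' = a + r * b %[mod M].
  rewrite modnDml addnAC (modDl _ e2) -addnA -mulnDl.
  by rewrite (modDr _ (kq_mod ek)) e1.
have bM : b' <= M by apply: ltnW.
have aM : a <= M by apply: ltnW.
have c2 : r * zdiff M b b' = zdiff M x a %[mod M].
  apply: zdiff_char => //; apply/eqP; rewrite -(eqn_modDr (r * b')).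
  rewrite -addnA [a + _]addnC addnA -mulnDr (modDl _ (modMr r (zdiffK b bM))).
  by rewrite c1 addnC.
have g : gcdn (zdiff M x a) M = gcdn (zdiff M b b') M.
  by rewrite -(gcd_mod c2) gcd_unit.
have := H a' a b b' k kp a'A aA bB b'B g.
rewrite (dvd_zdiff _ pnM aM) => /eqP xa.
have := mod_down pnM c1; rewrite -modnDml xa modnDml => /eqP.
by rewrite eqn_modDl => /eqP.
Qed.

Lemma gcd_to_unit (x y b b' : nat) : y <= M -> b' <= M ->
  gcdn (zdiff M x y) M = gcdn (zdiff M b b') M ->
  exists r, [/\ coprime r M, r < M & x + r * b' = y + r * b %[mod M]].
Proof.
move=> yM bM e.
case: (unit_exists M0 e) => r0 [cr er].
exists (r0 %% M); split.
- by rewrite coprime_modl.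
- by apply: ltn_pmod.
rewrite (modDr x (modnMml r0 b' M)) (modDr y (modnMml r0 b M)).
rewrite -(modDl (r0 * b') (zdiffK x yM)).
rewrite (modDl (r0 * b') (modDl y er)).
rewrite -(modDr y (modMr r0 (zdiffK b bM))).
by rewrite mulnDr addnAC addnC.
Qed.

Lemma mulsetP r (c : 'I_M) :
  reflect (exists2 b : 'I_M, b \in B & val c = (r * b) %% M) (c \in mulset r B).
Proof.
rewrite inE; apply: (iffP existsP).
  by case=> b /andP[bB /eqP e]; exists b.
by case=> b bB e; exists b; rewrite bB e eqxx.
Qed.

Lemma fiberP (z w : 'I_M) :
  reflect (exists k : 'I_p, val w = (z + k * q) %% M) (w \in fiber p z).
Proof.
rewrite inE; apply: (iffP existsP).
  by case=> k /eqP e; exists k.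
by case=> k e; exists k; rewrite e eqxx.
Qed.

Lemma SigmaP (X Y Z : {set 'I_M}) (x : 'I_M) :
  reflect (x \in X /\ exists2 y, y \in Y & exists2 w, w \in Z & val w = (x + y) %% M)
    (x \in Sigma X Y Z).
Proof.
rewrite inE; apply: (iffP andP).
  case=> xX /existsP[y /andP[yY /existsP[w /andP[wZ /eqP e]]]].
  by split=> //; exists y => //; exists w.
case=> xX [y yY [w wZ e]]; split => //; apply/existsP; exists y.
by rewrite yY; apply/existsP; exists w; rewrite wZ e eqxx.
Qed.

Lemma SigmaC_unpack r (z c : 'I_M) : c \in Sigma (mulset r B) A (fiber p z) ->
  exists b : 'I_M, exists a : 'I_M, exists k : 'I_p,
    [/\ b \in B, a \in A, val c = (r * b) %% M & a + r * b = z + k * q %[mod M]].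
Proof.
case/SigmaP=> /mulsetP[b bB ec] [a aA [w /fiberP[k ew] ew']].
exists b, a, k; split => //.
by rewrite -modnDmr -ec addnC -ew' ew.
Qed.

Lemma SigmaA_unpack r (z a : 'I_M) : a \in Sigma A (mulset r B) (fiber p z) ->
  exists b : 'I_M, exists k : 'I_p,
    [/\ b \in B, a \in A & a + r * b = z + k * q %[mod M]].
Proof.
case/SigmaP=> aA [c /mulsetP[b bB ec] [w /fiberP[k ew] ew']].
exists b, k; split => //.
by rewrite -modnDmr -ec -ew' ew.
Qed.

Lemma SP_II1 r : SP -> coprime r M -> forall z c c' : 'I_M,
  c \in Sigma (mulset r B) A (fiber p z) -> c' \in Sigma (mulset r B) A (fiber p z) ->
  p ^ n %| zdiff M c c'.
Proof.
move=> H cr z c c' /SigmaC_unpack[b [a [k [bB aA ec e]]]].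
move=> /SigmaC_unpack[b' [a' [k' [b'B a'A ec' e']]]].
have := FL H cr aA a'A bB b'B e e'.
rewrite (dvd_zdiff _ pnM (ltnW (ltn_ord c'))) ec ec' !(modn_dvdm _ pnM) => ->.
by [].
Qed.

Lemma mod_sub d d' x y : d %| d' -> x = y %[mod d'] -> x = y %[mod d].
Proof. by move=> dd e; rewrite -(modn_dvdm x dd) e (modn_dvdm y dd). Qed.

Lemma kq_neq k1 k2 : k1 < p -> k2 < p -> k1 != k2 -> k1 * q != k2 * q %[mod p ^ n].
Proof.
move=> k1p k2p ne; apply/negP => /eqP e.
wlog lt : k1 k2 k1p k2p ne e / k1 < k2.
  move=> W; case: (ltngtP k1 k2) => h.
  - exact: W h.
  - by apply: (W k2 k1) => //; rewrite eq_sym.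
  - by move: ne; rewrite h eqxx.
have le : k1 * q <= k2 * q by rewrite leq_mul2r (ltnW lt) orbT.
have : p ^ n %| k2 * q - k1 * q by rewrite -(eqn_mod_dvd _ le) e.
rewrite -mulnBl; apply/negP; apply: (pn_ndvd_kq M0 pp pM).
by rewrite subn_gt0 lt /= (leq_ltn_trans (leq_subr _ _) k2p).
Qed.

Lemma SP_II2 r : SP -> coprime r M -> forall z a a' : 'I_M,
  a \in Sigma A (mulset r B) (fiber p z) -> a' \in Sigma A (mulset r B) (fiber p z) ->
  a != a' -> p ^ n.-1 %| zdiff M a a' /\ ~~ (p ^ n %| zdiff M a a').
Proof.
move=> H cr z a a' /SigmaA_unpack[b [k1 [bB aA e1]]] /SigmaA_unpack[b' [k2 [b'B a'A e2]]] naa.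
have rr := FL H cr aA a'A bB b'B e1 e2.
have EM : a + k2 * q + r * b = a' + k1 * q + r * b' %[mod M].
  rewrite addnAC (modDl _ e1) [in RHS]addnAC (modDl _ e2).
  by rewrite addnAC.
have E : a + k2 * q = a' + k1 * q %[mod p ^ n].
  apply/eqP; rewrite -(eqn_modDr (r * b')); apply/eqP.
  by rewrite -(modDr _ rr) (mod_down pnM EM).
have k12 : k1 != k2.
  apply/negP => /eqP ek.
  have e : a + r * b = a' + r * b' %[mod M] by rewrite e1 e2 ek.
  by case: (tij_uniq M1 T cr aA a'A bB b'B e) => /eqP; rewrite (negbTE naa).
have aM : a' <= M by apply: ltnW.
have sM : p ^ n.-1 %| M by apply: dvdn_trans _ pnM; apply: dvdn_exp2l; apply: leq_pred.
have sq : p ^ n.-1 %| q := s_dvd_q M0 pp pM.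
split.
  rewrite (dvd_zdiff _ sM aM).
  have := mod_sub (dvdn_exp2l p (leq_pred n)) E.
  by rewrite -modnDmr (eqP (dvdn_mull k2 sq)) addn0 -[in RHS]modnDmr (eqP (dvdn_mull k1 sq)) addn0 => ->.
rewrite (dvd_zdiff _ pnM aM); apply/negP => /eqP ea.
move: E; rewrite -modnDml ea modnDml => /eqP; rewrite eqn_modDl => e.
by move: (kq_neq (ltn_ord k2) (ltn_ord k1)); rewrite eq_sym k12 e => /(_ isT).
Qed.


Lemma II_SP :
  (forall r : 'I_M, coprime r M -> forall z : 'I_M,
     splits_parity p n (mulset r B) A (fiber p z)) -> SP.
Proof.
move=> H a a' b b' k kp aA a'A bB b'B g.
set x := (a + k * q) %% M.
have [r [cr rM e]] := gcd_to_unit (ltnW (ltn_ord a')) (ltnW (ltn_ord b')) g.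
pose ri : 'I_M := Ordinal rM.
pose c : 'I_M := Ordinal (ltn_pmod (r * b') M0).
pose c' : 'I_M := Ordinal (ltn_pmod (r * b) M0).
pose z : 'I_M := Ordinal (ltn_pmod (c' + a') M0).
have p0 : 0 < p := prime_gt0 pp.
have c'S : c' \in Sigma (mulset ri B) A (fiber p z).
  apply/SigmaP; split; first by apply/mulsetP; exists b.
  exists a' => //; exists z => //; apply/fiberP; exists (Ordinal p0).
  by rewrite /= mul0n addn0 modn_mod.
have cS : c \in Sigma (mulset ri B) A (fiber p z).
  apply/SigmaP; split; first by apply/mulsetP; exists b'.
  exists a => //; exists (Ordinal (ltn_pmod (c + a) M0)) => //; apply/fiberP.
  exists (Ordinal (ltn_pmod (p - k) p0)) => /=.
  apply/eqP; rewrite -(eqn_modDr (k * q)); apply/eqP.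
  have ek : (p - k) %% p + k = 0 %[mod p].
    by rewrite modnDml (subnK (ltnW kp)) modnn mod0n.
  rewrite -[in RHS]addnA -[in RHS]mulnDl (modDr _ (kq_mod ek)) mul0n addn0 modn_mod.
  rewrite -addnA addnC modnDmr -modnDml e modnDml addnC.
  by [].
have cr' : coprime ri M by [].
case: (H ri cr' z) => H1 _.
have := H1 c c' cS c'S.
rewrite (dvd_zdiff _ pnM (ltnW (ltn_ord c'))) /= !(modn_dvdm _ pnM) => /eqP rr.
rewrite (dvd_zdiff _ pnM (ltnW (ltn_ord a'))); apply/eqP.
have := mod_down pnM e; rewrite -(modDr _ rr) => /eqP.
by rewrite eqn_modDr => /eqP.
Qed.

Lemma SP_III : SP -> forall a b x : 'I_M, a \in A -> b \in B -> x \in fiber p a ->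
  Axy A B x b \subset Pi x (p ^ n).
Proof.
move=> H a b x aA bB /fiberP[k ex]; apply/subsetP => a'.
rewrite !inE => /andP[a'A /existsP[b' /andP[b'B /eqP g]]].
rewrite ex; apply: (H a a' b b' k (ltn_ord k)) => //.
by rewrite -ex.
Qed.

Lemma III_SP : (forall a b x : 'I_M, a \in A -> b \in B -> x \in fiber p a ->
  Axy A B x b \subset Pi x (p ^ n)) -> SP.
Proof.
move=> H a a' b b' k kp aA a'A bB b'B g.
pose x : 'I_M := Ordinal (ltn_pmod (a + k * q) M0).
have xf : x \in fiber p a by apply/fiberP; exists (Ordinal kp).
have := subsetP (H a b x aA bB xf) a'.
rewrite !inE a'A /=; apply; apply/existsP; exists b'.
by rewrite b'B /= g eqxx.
Qed.

Lemma zdiff_shift (a a' : 'I_M) k :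
  zdiff M ((a + k * q) %% M) a' = zdiff M a a' + k * q %[mod M].
Proof.
apply/esym; apply: zdiff_char; first exact: ltnW.
by rewrite modn_mod addnAC (modDl _ (zdiffK a (ltnW (ltn_ord a')))).
Qed.

Lemma zdiff_self (a : 'I_M) : zdiff M a a = 0.
Proof. by rewrite /zdiff addnC addnK modnn. Qed.

Lemma I_SP : (forall m, p ^ n %| m -> m %| M -> Div A m -> ~ Div B (m %/ p)) -> SP.
Proof.
move=> H a a' b b' k kp aA a'A bB b'B g.
set u := zdiff M a a'.
have ex := zdiff_shift a a' k.
rewrite (dvd_modM pnM ex); rewrite (gcd_mod ex) in g.
have [k0|k0] := posnP k.
  move: g; rewrite k0 mul0n addn0 => g.
  by rewrite /u (sands M1 T aA a'A bB b'B g) zdiff_self dvdn0.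
have kp' : 0 < k < p by rewrite k0 kp.
apply/negPn/negP => nd.
have [pu|pu] := boolP (p ^ n %| u).
  move: g; rewrite (gcd_shift_p M0 pp pM kp' pu) => g.
  apply: (H (gcdn u M)).
  - by rewrite dvdn_gcd pu pnM.
  - exact: dvdn_gcdr.
  - by exists a, a'; split.
  - by exists b, b'; split.
move: g; rewrite (gcd_shift_same pp pM kp' pu nd) => g.
by move: pu; rewrite /u (sands M1 T aA a'A bB b'B g) zdiff_self dvdn0.
Qed.

Lemma SP_I2 : SP -> forall m, p ^ n %| m -> m %| M -> Div A m -> ~ Div B (m %/ p).
Proof.
move=> H m pm mM [a [a' [aA a'A ga]]] [b [b' [bB b'B gb]]].
have kp : 1 < p := prime_gt1 pp.
have ex := zdiff_shift a a' 1.
have pu : p ^ n %| zdiff M a a' by apply: dvdn_trans pm _; rewrite -ga dvdn_gcdl.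
have kp' : 0 < 1 < p by rewrite kp.
have g : gcdn (zdiff M ((a + 1 * q) %% M) a') M = gcdn (zdiff M b b') M.
  by rewrite (gcd_mod ex) (gcd_shift_p M0 pp pM kp' pu) ga gb.
have := H a a' b b' 1 kp aA a'A bB b'B g.
rewrite (dvd_modM pnM ex) dvdn_addr //.
by apply/negP; apply: (pn_ndvd_kq M0 pp pM kp').
Qed.

Lemma T_Utile : Utile A B (fun b : 'I_M => nat_of_ord b).
Proof. move=> x; case: (T x) => ab [h u]; exists ab; split => // ab' h'; exact: u. Qed.

Definition pr (x : 'I_M) : 'I_M * 'I_M :=
  odflt (x, x) [pick ab | [&& ab.1 \in A, ab.2 \in B & (ab.1 + ab.2) %% M == x]].

Lemma prP (x : 'I_M) : [&& (pr x).1 \in A, (pr x).2 \in B & ((pr x).1 + (pr x).2) %% M == x].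
Proof.
rewrite /pr; case: pickP => [ab h|none] //=.
by case: (T x) => ab [h _]; move: (none ab); rewrite h.
Qed.

Lemma pr_uniq (x : 'I_M) (ab : 'I_M * 'I_M) : [&& ab.1 \in A, ab.2 \in B & (ab.1 + ab.2) %% M == x] -> ab = pr x.
Proof.
move=> h; case: (T x) => ab0 [h0 u].
by rewrite -(u _ h) -(u _ (prP x)).
Qed.

Lemma sum_pr : (\sum_(x : 'I_M) 'X^((pr x).1) = polyA A *+ #|B| :> {poly int})%R.
Proof.
rewrite -(sum_Utile M0 (fun x : 'I_M => ('X^((pr x).1) : {poly int})%R) T_Utile).
rewrite (eq_bigr (fun ab : 'I_M * 'I_M => ('X^(ab.1) : {poly int})%R)); last first.
  move=> ab /andP[aA bB].
  have -> : pr (phi M0 (fun b : 'I_M => nat_of_ord b) ab) = ab.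
    by apply/esym/pr_uniq; rewrite aA bB /=.
  by [].
have -> : (\sum_(ab | inAB A B ab) ('X^(ab.1) : {poly int}) =
    \sum_(a in A) \sum_(b in B) 'X^a)%R by rewrite pair_big_dep.
rewrite /polyA -sumrMnl; apply: eq_bigr => a _.
by rewrite sumr_const.
Qed.

Lemma k_choice : exists k, k * q = p ^ n.-1 %[mod p ^ n].
Proof.
case: (pfactor_coprime pp M0) => m cm DM.
have m0 : 0 < m by move: M0; rewrite DM muln_gt0 => /andP[].
case: (@egcdnP m p m0) => km kn ek _.
exists km.
have Dq : q = m * p ^ n.-1.
  by rewrite {1}DM (pn_split M0 pp pM) mulnA mulnK // prime_gt0.
rewrite Dq mulnA ek.
have -> : gcdn m p = 1 by move: cm; rewrite coprime_sym => /eqP.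
rewrite mulnDl mul1n -mulnA [p * _]mulnC -(pn_split M0 pp pM).
by rewrite modnMDl.
Qed.

Definition sh k (x : 'I_M) : 'I_M := Ordinal (ltn_pmod (x + k * q) M0).

Lemma sh_inj k : injective (sh k).
Proof.
move=> x y /(congr1 val) /= /eqP; rewrite eqn_modDr !modn_small // => /eqP.
exact: val_inj.
Qed.

Lemma pr_shift k (x : 'I_M) : SP -> (pr (sh k x)).1 = (pr x).1 + k * q %[mod p ^ n].
Proof.
move=> H.
move: (prP x) (prP (sh k x)); set ab := pr x; set ab' := pr (sh k x).
case/and3P=> aA bB /eqP e1; case/and3P=> a'A b'B /eqP e2.
have E1 : ab.1 + 1 * ab.2 = x + 0 * q %[mod M].
  by rewrite mul1n mul0n addn0 e1 modn_small.
have E2 : ab'.1 + 1 * ab'.2 = x + k * q %[mod M].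
  by rewrite mul1n e2.
have := FL H (coprime1n M) aA a'A bB b'B E1 E2; rewrite !mul1n => bb.
apply/eqP; rewrite -(eqn_modDr ab.2); apply/eqP.
rewrite !mul1n in E1 E2.
rewrite (modDr _ bb) (mod_down pnM E2) addnAC (modDl _ (mod_down pnM E1)).
by rewrite mul0n addn0.
Qed.

Lemma XmodN (N u v : nat) : 0 < N -> u = v %[mod N] ->
  (('X^N - 1 : {poly int}) %| 'X^u - 'X^v)%R.
Proof.
move=> N0 e.
have h w : (('X^N - 1 : {poly int}) %| 'X^w - 'X^(w %% N))%R.
  rewrite {1}(divn_eq w N) exprD mulnC exprM.
  rewrite -{2}(mul1r ('X^(w %% N))%R) -mulrBl.
  apply: Pdiv.Idomain.dvdp_mulr; rewrite [X in (_ %| X)%R]subrX1.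
  by apply: Pdiv.Idomain.dvdp_mulr; apply: Pdiv.Idomain.dvdpp.
have := Pdiv.Idomain.dvdp_sub (h u) (h v).
by rewrite e opprB addrA subrK.
Qed.

Lemma Phi_div : SP -> ('Phi_(p ^ n) %| polyA A)%R.
Proof.
move=> H.
case: k_choice => k ek.
set s := p ^ n.-1.
set Y := (polyA A *+ #|B| : {poly int})%R.
have N0 : 0 < p ^ n by rewrite expn_gt0 prime_gt0.
have h1 : (('X^(p ^ n) - 1 : {poly int}) %| Y - 'X^s * Y)%R.
  rewrite /Y -sum_pr {1}(reindex_inj (@sh_inj k)) /= mulr_sumr -sumrB.
  apply: (@big_ind _ (fun Q : {poly int} => (('X^(p ^ n) - 1) %| Q)%R)).
  - exact: Pdiv.Idomain.dvdp0.
  - by move=> x y; apply: Pdiv.Idomain.dvdp_add.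
  move=> x _; rewrite -exprD; apply: XmodN => //.
  by rewrite (pr_shift k x H) (modDr _ ek) addnC.
have h2 : (('X^(p ^ n) - 1 : {poly int}) %| Y * ('X^s - 1))%R.
  by rewrite mulrBr mulr1 mulrC -[('X^s * Y - Y)%R]opprB Pdiv.Idomain.dvdpNr.
move: h2; rewrite -{1}(prednK (n_gt0 M0 pp pM)) Phi_pp // prednK ?(n_gt0 M0 pp pM) //.
rewrite Pdiv.Idomain.dvdp_mul2r; last first.
  by rewrite -size_poly_eq0 size_XnsubC // expn_gt0 prime_gt0.
have B0 : 0 < #|B|.
  rewrite lt0n; apply/negP => /eqP B0.
  by move: (Utile_cardAB M1 T_Utile); rewrite B0 muln0 => M00; move: M0; rewrite -M00.
rewrite /Y -scaler_nat Pdiv.Idomain.dvdpZr //.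
by rewrite Num.Theory.pnatr_eq0 -lt0n.
Qed.

End Main.
Theorem lemma5p4 (M p : nat) (A B : {set 'I_M}) :
  0 < M -> prime p -> p %| M -> tiling A B ->
  let n := logn p M in
  let condI :=
    (('Phi_(p ^ n) %| polyA A)%R /\
     forall m : nat, p ^ n %| m -> m %| M -> Div A m -> ~ Div B (m %/ p)) in
  let condII :=
    (forall r : 'I_M, coprime r M ->
       forall z : 'I_M, splits_parity p n (mulset r B) A (fiber p z)) in
  let condIII :=
    (forall a b x : 'I_M, a \in A -> b \in B -> x \in fiber p a ->
       Axy A B x b \subset Pi x (p ^ n)) in
  (condI <-> condII) /\ (condII <-> condIII).
Proof.
move=> M0 pp pM T n condI condII condIII.
have SP_II : SP p A B -> condII.
  move=> H r cr z; split.
    by move=> c c'; apply: (SP_II1 pp pM H cr).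
  by move=> a a'; apply: (SP_II2 M0 pp pM T H cr).
have II_SP' : condII -> SP p A B by move=> H; apply: (II_SP M0 pp pM H).
have SP_III' : SP p A B -> condIII by move=> H; apply: (SP_III H).
have III_SP' : condIII -> SP p A B by move=> H; apply: (III_SP M0 H).
have I_SP' : condI -> SP p A B by case=> _ H; apply: (I_SP M0 pp pM T H).
have SP_I : SP p A B -> condI.
  move=> H; split; first exact: (Phi_div M0 pp pM T H).
  exact: (SP_I2 M0 pp pM H).
split; split => H.
- exact: SP_II (I_SP' H).
- exact: SP_I (II_SP' H).
- exact: SP_III' (II_SP' H).
- exact: SP_II (III_SP' H).
Qed.
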